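(* Let $G$ be a finite multigraph (no loops), let $\ell \geq 4$ be an integer, let $s$ be a vertex of $G$, and let $A \subsetneq V(G)$ with $s \notin A$ be such that $\lambda_G(x,y) \geq \ell$ for any two distinct $x,y\in A$ and such that no edge of $G$ has both endvertices outside $A$. If $\deg(s) = 4$, then $L(G,s,\tau_A)$ is one of: $K_4$, $K_{2,2}$, or the disjoint union of two edges. The last case can hold only if $\ell$ is odd.
   Context: $\lambda_G(x,y)$ is the maximum number of pairwise edge-disjoint $x$–$y$ paths in $G$. Lifting two distinct edges $sx,sy$ means deleting them and adding a new edge $xy$. The target function $\tau_A$ assigns $\ell$ to pairs of vertices both in $A$ and $0$ otherwise; a pair of edges at $s$ is $\tau_A$-admissible if after lifting them the new graph $G'$ satisfies $\lambda_{G'}(x,y)\ge\tau_A(x,y)$ for all distinct $x,y\in V(G)\setminus\{s\}$. The lifting graph $L(G,s,\tau_A)$ has as vertices the edges incident with $s$, two being adjacent iff they form a $\tau_A$-admissible pair. *)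

(* Defs.v *)
(* A finite multigraph on a finite vertex type V is a list
   of edges G : seq (V * V); edge number i is nth G i, so parallel edges are
   distinct list entries. *)
From mathcomp Require Import all_boot.
Set Implicit Arguments. Unset Strict Implicit. Unset Printing Implicit Defensive.

Section Multigraph.
Variable V : finType.
Implicit Types (G : seq (V * V)) (x y s : V).

Definition joins (e : V * V) (u v : V) : bool :=
  ((e.1 == u) && (e.2 == v)) || ((e.2 == u) && (e.1 == v)).

Definition is_path G x y (p : seq nat) : Prop :=
  exists vs : seq V,
    [/\ size vs = (size p).+1, nth x vs 0 = x, last x vs = y, uniq vs &
        forall k, k < size p ->
          nth 0 p k < size G /\
          joins (nth (x, x) G (nth 0 p k)) (nth x vs k) (nth x vs k.+1)].

(* lambda_G(x,y) >= k : there are k pairwise edge-disjoint x--y paths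
   (lambda is the maximum number of such paths). *)
Definition lambda_ge G x y (k : nat) : Prop :=
  exists ps : seq (seq nat),
    [/\ size ps = k,
        forall p, p \in ps -> is_path G x y p &
        forall i j, i < size ps -> j < size ps -> i != j ->
          forall e, e \in nth [::] ps i -> e \notin nth [::] ps j].

Definition tau (A : {set V}) (l : nat) x y : nat :=
  if (x \in A) && (y \in A) then l else 0.

Definition incident s (e : V * V) : bool := (e.1 == s) || (e.2 == s).

Definition other s (e : V * V) : V := if e.1 == s then e.2 else e.1.

Definition deg G s : nat := count (incident s) G.

(* lifting the edges number i and j (both at s): delete them, add x y where
   x, y are their other endvertices *)
Definition liftG G s (i j : nat) : seq (V * V) :=
  [seq q.2 | q <- zip (iota 0 (size G)) G & (q.1 != i) && (q.1 != j)]
  ++ [:: (other s (nth (s, s) G i), other s (nth (s, s) G j))].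

(* vertex set of the lifting graph: edges incident with s *)
Definition lvert G s : {set 'I_(size G)} :=
  [set i : 'I_(size G) | incident s (nth (s, s) G i)].

(* tau_A-admissible pair = adjacency in L(G, s, tau_A) *)
Definition admissible G s (A : {set V}) (l : nat) (i j : 'I_(size G)) : Prop :=
  [/\ i \in lvert G s, j \in lvert G s, i != j &
      forall x y, x != s -> y != s -> x != y ->
        lambda_ge (liftG G s i j) x y (tau A l x y)].
End Multigraph.

Section Shapes.
Variable T : finType.

Definition upair (a b : T) (s : seq (T * T)) : bool :=
  has (fun p => ((a, b) == p) || ((b, a) == p)) s.

Definition is_K4 (I : {set T}) (adj : T -> T -> Prop) : Prop :=
  #|I| = 4 /\ forall a b, a \in I -> b \in I -> (adj a b <-> a != b).

Definition shape4 (I : {set T}) (adj : T -> T -> Prop)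
    (E : T -> T -> T -> T -> seq (T * T)) : Prop :=
  exists e1 e2 e3 e4 : T,
    [/\ uniq [:: e1; e2; e3; e4], I = [set e1; e2; e3; e4] &
        forall a b, a \in I -> b \in I -> (adj a b <-> upair a b (E e1 e2 e3 e4))].

Definition is_K22 I adj : Prop :=
  shape4 I adj (fun e1 e2 e3 e4 => [:: (e1, e2); (e2, e3); (e3, e4); (e4, e1)]).

Definition is_2K2 I adj : Prop :=
  shape4 I adj (fun e1 e2 e3 e4 => [:: (e1, e2); (e3, e4)]).
End Shapes.
Arguments admissible [V] G s A l i j.

(* Main.v *)
Set Warnings "-notation-overridden,-parsing,-ambiguous-paths,-coercions".
Require Import Defs.
From mathcomp Require Import all_boot all_order all_algebra zify.
Set Implicit Arguments. Unset Strict Implicit. Unset Printing Implicit Defensive.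
Import GRing.Theory Num.Theory Order.TTheory.

Definition crossb (V : finType) (X : {set V}) (e : V * V) : bool :=
  (e.1 \in X) != (e.2 \in X).
Definition cut (V : finType) (G : seq (V * V)) (X : {set V}) : nat :=
  count (crossb X) G.

Lemma count_ord (T : Type) (s : seq T) (a : pred T) x0 :
  count a s = \sum_(i < size s) a (nth x0 s i).
Proof.
elim: s => [|z s IH]; first by rewrite big_ord0.
by rewrite big_ord_recl /= IH.
Qed.

Lemma card_ord_pred (T : Type) (s : seq T) (a : pred T) x0 :
  #|[set i : 'I_(size s) | a (nth x0 s i)]| = count a s.
Proof.
rewrite (count_ord _ _ x0) -sum1_card big_mkcond /=.
by apply: eq_bigr => i _; rewrite inE; case: (a _).
Qed.

Section Easy.
Variable V : finType.
Variable G : seq (V * V).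

Lemma cross_step (X : {set V}) x (vs : seq V) :
  nth x vs 0 \in X -> last x vs \notin X ->
  exists r, [/\ r.+1 < size vs, nth x vs r \in X & nth x vs r.+1 \notin X].
Proof.
elim: vs x => [|v vs IH] x /=; first by move=> ->.
case: vs IH => [|w vs] IH /=; first by move=> ->.
move=> Hv Hl; case: (boolP (w \in X)) => Hw.
  have [r [H1 H2 H3]] := IH x Hw Hl.
  by exists r.+1.
by exists 0.
Qed.

Lemma menger_easy x y k (X : {set V}) :
  lambda_ge G x y k -> x \in X -> y \notin X -> k <= cut G X.
Proof.
move=> [ps [Hs Hp Hd]] xX yX.
have H t : t < size ps -> exists c : 'I_(size G),
   (val c \in nth [::] ps t) && crossb X (nth (x, x) G c).
  move=> tl; have [vs [H1 H2 H3 H4 H5]] := Hp _ (mem_nth [::] tl).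
  have [r [r1 r2 r3]] : exists r, [/\ r.+1 < size vs, nth x vs r \in X & nth x vs r.+1 \notin X].
    by apply: cross_step; rewrite ?H2 ?H3.
  have rl : r < size (nth [::] ps t) by rewrite -ltnS -H1.
  have [c1 c2] := H5 _ rl.
  exists (Ordinal c1) => /=; rewrite mem_nth //=.
  move: c2; rewrite /joins /crossb.
  by case/orP=> /andP[/eqP-> /eqP->]; move: r2 r3; do 2 case: (_ \in X).
pose h (t : 'I_(size ps)) := [pick c : 'I_(size G) | (val c \in nth [::] ps t) && crossb X (nth (x, x) G c)].
have hS t : exists c, h t = Some c /\ (val c \in nth [::] ps t) && crossb X (nth (x, x) G c).
  rewrite /h; case: pickP => [c Hc|Hn]; first by exists c.
  by have [c Hc] := H t (ltn_ord t); move: (Hn c); rewrite Hc.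
have hinj : injective h.
  move=> t1 t2 E; apply/eqP; apply/negPn/negP => ne.
  have [c [Hc1 /andP[c1 _]]] := hS t1.
  have [c' [Hc2 /andP[c2 _]]] := hS t2.
  move: E; rewrite Hc1 Hc2 => -[Ec]; subst c'.
  by move: (Hd t1 t2 (ltn_ord t1) (ltn_ord t2) ne _ c1); rewrite c2.
have : #|h @: [set: 'I_(size ps)]| <= #|Some @: [set c : 'I_(size G) | crossb X (nth (x, x) G c)]|.
  apply: subset_leq_card; apply/subsetP => o /imsetP[t _ ->].
  have [c [-> /andP[_ c2]]] := hS t.
  by apply/imsetP; exists c; rewrite // inE.
rewrite !card_imset //; last by move=> a b [].
by rewrite cardsT card_ord card_ord_pred Hs.
Qed.
End Easy.

Section T.
Variable V : finType.
Variable G : seq (V * V).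
Variables x y : V.
Local Notation m := (size G).
Local Notation E e := (nth (x, x) G e).
Local Open Scope ring_scope.

Definition b2z (b : bool) : int := (b : nat)%:R.
Definition cval (e : 'I_m) (u : V) : int := b2z ((E e).1 == u) - b2z ((E e).2 == u).
Definition net (f : 'I_m -> int) u := \sum_(e < m) f e * cval e u.

Lemma sum_b2z_eq (a : V) (X : {set V}) : \sum_(u in X) b2z (a == u) = b2z (a \in X).
Proof.
case: (boolP (a \in X)) => H.
  rewrite (bigD1 a) //= eqxx big1 ?addr0 // => u /andP[_ ne].
  by rewrite eq_sym (negbTE ne).
by rewrite big1 // => u uX; case: eqP => // au; move: uX; rewrite -au (negbTE H).
Qed.

Lemma net_set f (X : {set V}) : \sum_(u in X) net f u =
  \sum_(e < m) f e * (b2z ((E e).1 \in X) - b2z ((E e).2 \in X)).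
Proof.
rewrite /net exchange_big /=; apply: eq_bigr => e _.
by rewrite -mulr_sumr sumrB !sum_b2z_eq.
Qed.


Definition isflow (f : 'I_m -> int) (k : nat) :=
  [/\ forall e, -1 <= f e <= 1, net f x = k%:R &
      forall u, u != x -> u != y -> net f u = 0].

Lemma net_cut f k (X : {set V}) : isflow f k -> x \in X -> y \notin X ->
  \sum_(u in X) net f u = k%:R.
Proof.
move=> [_ Hx Hc] xX yX; rewrite (bigD1 x) //= big1 ?addr0 // => u /andP[uX ux].
apply: (Hc u ux); apply: contraNneq yX => <-; exact: uX.
Qed.

Lemma netD f g u : net (fun e => f e + g e) u = net f u + net g u.
Proof. by rewrite /net -big_split; apply: eq_bigr => e _; rewrite mulrDl. Qed.

Lemma netB f g u : net (fun e => f e - g e) u = net f u - net g u.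
Proof. by rewrite /net -sumrB; apply: eq_bigr => e _; rewrite mulrBl. Qed.

Section Extract.
Variable ar : 'I_m -> V -> V -> bool.
Definition arel : rel V := fun u v => [exists e, ar e u v].
Definition pickar u v : nat := if [pick e | ar e u v] is Some e then val e else 0%N.

Definition pdata vs (chs : seq nat) :=
  [/\ size vs = (size chs).+1, nth x vs 0 = x, last x vs = y, uniq vs &
   forall t, (t < size chs)%N -> exists e : 'I_m,
      nth 0%N chs t = val e /\ ar e (nth x vs t) (nth x vs t.+1)].

Lemma extract : connect arel x y -> exists vs chs, pdata vs chs.
Proof.
case/connectP => p pth ey; move: ey.
case: (shortenP pth) => p' pth' up' _ ey.
exists (x :: p'), (pairmap pickar x p'); split => //=; first by rewrite size_pairmap.
move=> t; rewrite size_pairmap => tl.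
rewrite (nth_pairmap x 0%N _ tl).
move/(pathP x): pth' => /(_ t tl).
rewrite /pickar /arel; case: pickP => [e He|Hn] /existsP[e' He'].
  by exists e; split.
by move: (Hn e'); rewrite He'.
Qed.
End Extract.

Lemma eq_idx (vs : seq V) i j : uniq vs -> (i < size vs)%N -> (j < size vs)%N ->
  nth x vs i = nth x vs j -> i = j.
Proof. by move=> u il jl /eqP; rewrite nth_uniq // => /eqP. Qed.

Lemma joins_uniq (vs : seq V) (a : V * V) t r : uniq vs ->
  (t.+1 < size vs)%N -> (r.+1 < size vs)%N ->
  joins a (nth x vs t) (nth x vs t.+1) -> joins a (nth x vs r) (nth x vs r.+1) -> t = r.
Proof.
move=> u tl rl.
have tl' : (t < size vs)%N by apply: ltnW.
have rl' : (r < size vs)%N by apply: ltnW.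
rewrite /joins => /orP[/andP[/eqP e1 /eqP e2]|/andP[/eqP e1 /eqP e2]]
  /orP[/andP[/eqP e3 /eqP e4]|/andP[/eqP e3 /eqP e4]].
- by apply: (eq_idx u) => //; rewrite -e1 -e3.
- have h1 := eq_idx u tl' rl (etrans (esym e1) e4).
  have h2 := eq_idx u tl rl' (etrans (esym e2) e3). lia.
- have h1 := eq_idx u tl' rl (etrans (esym e1) e4).
  have h2 := eq_idx u tl rl' (etrans (esym e2) e3). lia.
- by apply: (eq_idx u) => //; rewrite -e1 -e3.
Qed.

Definition sgn (e : 'I_m) u : int := if (E e).1 == u then 1 else -1.
Definition psi (vs : seq V) (chs : seq nat) (e : 'I_m) : int :=
  \sum_(t < size chs) b2z (nth 0%N chs t == val e) * sgn e (nth x vs t).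

Section Psi.
Variable ar : 'I_m -> V -> V -> bool.
Hypothesis arJ : forall e u v, ar e u v -> joins (E e) u v.
Variables (vs : seq V) (chs : seq nat).
Hypothesis pd : pdata ar vs chs.

Lemma psi_at e t : (t < size chs)%N -> nth 0%N chs t = val e ->
  psi vs chs e = sgn e (nth x vs t).
Proof.
case: pd => sz _ _ u H tl Ht.
rewrite /psi (bigD1 (Ordinal tl)) //= Ht eqxx mul1r big1 ?addr0 // => t' ne.
case: eqP => [Ht'|]; last by rewrite mul0r.
exfalso; move: ne => /eqP; apply; apply: val_inj => /=.
have [e1 [E1 A1]] := H _ (ltn_ord t').
have [e2 [E2 A2]] := H _ tl.
have ee1 : e1 = e by apply: val_inj; rewrite -E1 Ht'.
have ee2 : e2 = e by apply: val_inj; rewrite -E2 Ht.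
subst e1 e2.
apply: (joins_uniq u _ _ (arJ A1) (arJ A2)); rewrite sz ltnS //; exact: ltn_ord.
Qed.

Lemma psi_off e : val e \notin chs -> psi vs chs e = 0.
Proof.
move=> ne; rewrite /psi big1 // => t _.
case: eqP => [Ht|]; last by rewrite mul0r.
by move: ne; rewrite -Ht mem_nth.
Qed.

Lemma psi_in e : val e \in chs -> exists t, [/\ (t < size chs)%N, nth 0%N chs t = val e,
  psi vs chs e = sgn e (nth x vs t) & ar e (nth x vs t) (nth x vs t.+1)].
Proof.
move=> ein; exists (index (val e) chs).
have tl : (index (val e) chs < size chs)%N by rewrite index_mem.
have nt := nth_index 0%N ein.
split => //; first by apply: psi_at.
case: pd => _ _ _ _ H; have [e' [E' A']] := H _ tl.
have ee : e = e' by apply: val_inj; rewrite -E' nt.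
by subst e'.
Qed.

Lemma sgn_cval (e : 'I_m) (a b u : V) : joins (E e) a b -> a != b ->
  sgn e a * cval e u = b2z (a == u) - b2z (b == u).
Proof.
rewrite /sgn /cval /joins => /orP[/andP[/eqP-> /eqP->]|/andP[/eqP-> /eqP->]] ab.
  by rewrite eqxx mul1r.
by rewrite eq_sym (negbTE ab) mulN1r opprB.
Qed.

Lemma telesc (F : nat -> int) n : \sum_(t < n) (F t - F t.+1) = F 0%N - F n.
Proof.
elim: n => [|n IH]; first by rewrite big_ord0 subrr.
by rewrite big_ord_recr /= IH addrA subrK.
Qed.

Lemma net_psi u : x != y -> net (psi vs chs) u = b2z (x == u) - b2z (y == u).
Proof.
move=> xy; case: (pd) => sz h0 hl u' H.
rewrite /net /psi.
under eq_bigr do rewrite mulr_suml.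
rewrite exchange_big /=.
under eq_bigr => t _.
  have [e [Et At]] := H _ (ltn_ord t).
  rewrite (bigD1 e) //= Et eqxx mul1r big1 ?addr0; last first.
    move=> e' ne; case: eqP => [/val_inj ee|]; last by rewrite !mul0r.
    by rewrite ee eqxx in ne.
  rewrite (sgn_cval u (arJ At)); last first.
    have tl : (t < size vs)%N by rewrite sz ltnS ltnW.
    have tl1 : (t.+1 < size vs)%N by rewrite sz ltnS.
    by rewrite nth_uniq //; apply/eqP; lia.
  over.
rewrite (telesc (fun t => b2z (nth x vs t == u))) h0.
by rewrite -[size chs]/((size chs).+1.-1) -sz nth_last hl.
Qed.
End Psi.

Definition resarc (f : 'I_m -> int) (e : 'I_m) u v :=
  ((E e).1 == u) && ((E e).2 == v) && (f e != 1) ||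
  ((E e).2 == u) && ((E e).1 == v) && (f e != -1).
Definition flowarc (f : 'I_m -> int) (e : 'I_m) u v :=
  ((E e).1 == u) && ((E e).2 == v) && (f e == 1) ||
  ((E e).2 == u) && ((E e).1 == v) && (f e == -1).

Lemma resarcJ f e u v : resarc f e u v -> joins (E e) u v.
Proof. by case/orP => /andP[/andP[/eqP <- /eqP <-] _]; rewrite /joins !eqxx ?orbT. Qed.
Lemma flowarcJ f e u v : flowarc f e u v -> joins (E e) u v.
Proof. by case/orP => /andP[/andP[/eqP <- /eqP <-] _]; rewrite /joins !eqxx ?orbT. Qed.


Lemma count_z (a : pred (V * V)) : ((count a G)%:R : int) = \sum_(e < m) b2z (a (E e)).
Proof. by rewrite (count_ord _ _ (x, x)) natr_sum. Qed.

Lemma isflow0 : isflow (fun _ => 0) 0.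
Proof.
split => [e||].
- by [] || lia.
- by rewrite /net big1 // => e _; rewrite mul0r.
- by move=> u _ _; rewrite /net big1 // => e _; rewrite mul0r.
Qed.

Lemma augment f j vs chs : x != y -> isflow f j -> pdata (resarc f) vs chs ->
  isflow (fun e => f e + psi vs chs e) j.+1.
Proof.
move=> xy [cap nx nc] pd; split.
- move=> e; case: (boolP (val e \in chs)) => ein; last first.
    by rewrite psi_off ?addr0.
  have [t [tl Et -> A]] := psi_in (@resarcJ f) pd ein.
  have ne : nth x vs t != nth x vs t.+1.
    case: pd => sz _ _ u _; rewrite nth_uniq ?sz ?ltnS ?(ltnW tl) //; apply/eqP; lia.
  move: A (cap e) ne; rewrite /resarc /sgn.
  case/orP => /andP[/andP[/eqP e1 /eqP e2] h].
    rewrite e1 eqxx => c _; lia.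
  rewrite e2 => c ne.
  have -> : (nth x vs t.+1 == nth x vs t) = false by rewrite eq_sym; apply/negbTE.
  lia.
- rewrite netD nx (net_psi (@resarcJ f) pd _ xy) eqxx (eq_sym y x) (negbTE xy) /b2z /=.
  by rewrite subr0 natr1.
- move=> u ux uy; rewrite netD nc // (net_psi (@resarcJ f) pd _ xy).
  by rewrite (eq_sym x u) (eq_sym y u) (negbTE ux) (negbTE uy) /b2z /= ?subrr ?addr0.
Qed.

Lemma maxflow k j : x != y -> (j <= k)%N -> (exists f, isflow f j) \/
  exists X : {set V}, [/\ x \in X, y \notin X & (cut G X < k)%N].
Proof.
move=> xy; elim: j => [|j IH] jk; first by left; exists (fun _ => 0); exact: isflow0.
case: (IH (ltnW jk)) => [[f fl]|]; last by right.
case: (boolP (connect (arel (resarc f)) x y)) => [c|nc].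
  have [vs [chs pd]] := extract c.
  by left; exists (fun e => f e + psi vs chs e); apply: augment.
right; set X := [set u | connect (arel (resarc f)) x u].
have xX : x \in X by rewrite inE connect0.
have yX : y \notin X by rewrite inE.
exists X; split => //.
suff : ((cut G X)%:R : int) = j%:R by move/eqP; rewrite eqr_nat => /eqP ->.
rewrite -(net_cut fl xX yX) net_set /cut count_z.
apply: eq_bigr => e _; rewrite /crossb !inE.
case: fl => cap _ _.
case: (boolP (connect _ x (E e).1)) => h1; case: (boolP (connect _ x (E e).2)) => h2 /=.
- by rewrite subrr mulr0.
- have : ~~ resarc f e (E e).1 (E e).2.
    apply: contra h2 => r; apply: connect_trans h1 (connect1 _).
    by apply/existsP; exists e.
  rewrite /resarc !eqxx /= negb_or => /andP[/negPn/eqP -> _].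
  by rewrite /b2z /= subr0 mulr1.
- have : ~~ resarc f e (E e).2 (E e).1.
    apply: contra h1 => r; apply: connect_trans h2 (connect1 _).
    by apply/existsP; exists e.
  rewrite /resarc !eqxx /= negb_or => /andP[_ /negPn/eqP ->].
  by rewrite /b2z /= sub0r mulrNN mulr1.
- by rewrite subrr mulr0.
Qed.

Lemma decomp k : x != y -> forall f, isflow f k -> exists ps : seq (seq nat),
  [/\ size ps = k, (forall p, p \in ps -> is_path G x y p),
      (forall i j, (i < size ps)%N -> (j < size ps)%N -> i != j ->
        forall e, e \in nth [::] ps i -> e \notin nth [::] ps j) &
      (forall p e, p \in ps -> e \in p -> exists e' : 'I_m, val e' = e /\ f e' != 0)].
Proof.
move=> xy; elim: k => [|k IH] f fl.
  by exists [::]; split.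
case: (boolP (connect (arel (flowarc f)) x y)) => [c|nc]; last first.
  exfalso; set X := [set u | connect (arel (flowarc f)) x u].
  have xX : x \in X by rewrite inE connect0.
  have yX : y \notin X by rewrite inE.
  have := net_cut fl xX yX; rewrite net_set.
  have : \sum_(e < m) f e * (b2z ((E e).1 \in X) - b2z ((E e).2 \in X)) <= 0.
    apply: sumr_le0 => e _; case: fl => cap _ _; rewrite !inE.
    case: (boolP (connect _ x (E e).1)) => h1; case: (boolP (connect _ x (E e).2)) => h2 /=.
    - by rewrite subrr mulr0.
    - have : ~~ flowarc f e (E e).1 (E e).2.
        apply: contra h2 => r; apply: connect_trans h1 (connect1 _).
        by apply/existsP; exists e.
      rewrite /flowarc !eqxx /= negb_or => /andP[h _].
      rewrite /b2z /= subr0 mulr1; move: (cap e) h; lia.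
    - have : ~~ flowarc f e (E e).2 (E e).1.
        apply: contra h1 => r; apply: connect_trans h2 (connect1 _).
        by apply/existsP; exists e.
      rewrite /flowarc !eqxx /= negb_or => /andP[_ h].
      rewrite /b2z /= sub0r mulrN mulr1; move: (cap e) h; lia.
    - by rewrite subrr mulr0.
  move=> h1 h2; rewrite h2 in h1; move: h1.
  by rewrite -(mulr0n (1 : int)) ler_nat.
have [vs [chs pd]] := extract c.
have fJ := @flowarcJ f.
pose g e := f e - psi vs chs e.
have gin e : val e \in chs -> g e = 0 /\ f e != 0.
  move=> ein; rewrite /g; have [t [tl Et -> A]] := psi_in fJ pd ein.
  have ne : nth x vs t != nth x vs t.+1.
    case: pd => sz _ _ u _; rewrite nth_uniq ?sz ?ltnS ?(ltnW tl) //; apply/eqP; lia.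
  move: A ne; rewrite /flowarc /sgn.
  case/orP => /andP[/andP[/eqP e1 /eqP e2] /eqP h].
    by rewrite e1 eqxx h subrr.
  rewrite e2 => ne.
  have -> : (nth x vs t.+1 == nth x vs t) = false by rewrite eq_sym; apply/negbTE.
  by rewrite h subrr.
have goff e : val e \notin chs -> g e = f e by move=> h; rewrite /g psi_off // subr0.
have gfl : isflow g k.
  case: fl => cap nx nc; split.
  - move=> e; case: (boolP (val e \in chs)) => ein.
      by rewrite (gin e ein).1.
    by rewrite goff.
  - rewrite netB nx (net_psi fJ pd _ xy) eqxx (eq_sym y x) (negbTE xy) /b2z /=.
    by rewrite subr0 -natr1 addrK.
  - move=> u ux uy; rewrite netB nc // (net_psi fJ pd _ xy).
    by rewrite (eq_sym x u) (eq_sym y u) (negbTE ux) (negbTE uy) /b2z /= ?subrr.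
have [ps [sz pth dsj sup]] := IH g gfl.
have chs_ps e : e \in chs -> forall p, p \in ps -> e \notin p.
  move=> ein p pin; apply/negP => ep.
  have [e' [E' ge']] := sup p e pin ep.
  by subst e; rewrite (gin e' ein).1 eqxx in ge'.
exists (chs :: ps); split.
- by rewrite /= sz.
- move=> p; rewrite inE => /orP[/eqP ->|]; last exact: pth.
  case: pd => H1 H2 H3 H4 H5; exists vs; split => // t tl.
  have [e [Et A]] := H5 t tl.
  by rewrite Et (ltn_ord e) (flowarcJ A).
- move=> [|i] [|j] //= il jl ij e.
  + by move=> ein; apply: chs_ps => //; apply: mem_nth.
  + move=> ei; apply/negP => ej; move: ei; apply/negP.
    by apply: chs_ps => //; apply: mem_nth.
  + by apply: dsj.
- move=> p e; rewrite inE => /orP[/eqP ->|pin] ep.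
    case: (pd) => _ _ _ _ H5.
    have tl : (index e chs < size chs)%N by rewrite index_mem.
    have [e' [E' _]] := H5 _ tl.
    have ein' : val e' \in chs by rewrite -E' mem_nth.
    exists e'; split; first by rewrite -E' nth_index.
    exact: (gin e' ein').2.
  have [e' [E' ge']] := sup p e pin ep.
  exists e'; split => //.
  case: (boolP (val e' \in chs)) => ein; first by rewrite (gin e' ein).1 eqxx in ge'.
  by rewrite -(goff e' ein).
Qed.

Lemma menger k : x != y -> lambda_ge G x y k \/
  exists X : {set V}, [/\ x \in X, y \notin X & (cut G X < k)%N].
Proof.
move=> xy; case: (maxflow xy (leqnn k)) => [[f fl]|]; last by right.
left; have [ps [H1 H2 H3 _]] := decomp xy fl.
by exists ps; split.
Qed.
End T.
Section PE.
Variable V : finType.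
Implicit Types (X Y Z : {set V}) (u v s : V).

Lemma pe_addS X s u v : s \notin X -> u != v ->
  crossb (s |: X) (u, v) + (incident s (u, v) && (other s (u, v) \in X)) =
  crossb X (u, v) + (incident s (u, v) && (other s (u, v) \notin X)).
Proof.
rewrite /crossb /incident /other /= !inE => sX uv.
case: (eqVneq u s) => [eu|us]; first subst u.
  rewrite ?eqxx (negbTE sX) (eq_sym v s) (negbTE uv) /=.
  by case: (v \in X).
case: (eqVneq v s) => [ev|vs]; first subst v.
  by rewrite ?eqxx (negbTE sX) ?(negbTE us) /= ?orbT; case: (u \in X).
by case: (u \in X); case: (v \in X).
Qed.

Lemma pe_par X Y s u v : s \notin X -> s \notin Y -> u != v ->
  crossb (X :&: Y) (u, v) + crossb (X :\: Y) (u, v) + crossb (Y :\: X) (u, v) +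
  crossb (~: (s |: (X :|: Y))) (u, v) +
  (incident s (u, v) && (other s (u, v) \in X)) + (incident s (u, v) && (other s (u, v) \in Y)) +
  (incident s (u, v) && (other s (u, v) \in X) && (other s (u, v) \in Y)) <=
  (crossb X (u, v)).*2 + (crossb Y (u, v)).*2 +
  (incident s (u, v) && (other s (u, v) \notin X) && (other s (u, v) \notin Y)).
Proof.
move=> sX sY uv; rewrite /crossb /incident /other /= !inE.
case: (eqVneq u s) => [eu|us]; first subst u.
  rewrite ?eqxx (negbTE sX) (negbTE sY) (eq_sym v s) (negbTE uv) /=.
  by case: (v \in X); case: (v \in Y).
case: (eqVneq v s) => [ev|vs]; first subst v.
  rewrite ?eqxx (negbTE sX) (negbTE sY) /= ?orbT.
  by case: (u \in X); case: (u \in Y).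
by case: (u \in X); case: (u \in Y); case: (v \in X); case: (v \in Y).
Qed.

Lemma pe_three X Y Z u v :
  crossb (X :&: Y :&: Z) (u, v) + crossb (X :\: Y :\: Z) (u, v) +
  crossb (Y :\: X :\: Z) (u, v) + crossb (Z :\: X :\: Y) (u, v) <=
  crossb X (u, v) + crossb Y (u, v) + crossb Z (u, v).
Proof.
rewrite /crossb /= !inE.
by case: (u \in X); case: (u \in Y); case: (u \in Z); case: (v \in X); case: (v \in Y); case: (v \in Z).
Qed.

Lemma pe_union X Y u v :
  crossb (X :&: Y) (u, v) + crossb (X :\: Y) (u, v) =
  crossb X (u, v) + (((u \in X :&: Y) && (v \in X :\: Y)) || ((u \in X :\: Y) && (v \in X :&: Y))).*2.
Proof.
rewrite /crossb /= !inE.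
by case: (u \in X); case: (u \in Y); case: (v \in X); case: (v \in Y).
Qed.

Lemma pe_rest s u v X Y :
  (incident s (u, v) && (other s (u, v) \notin X) && (other s (u, v) \notin Y)) +
  (incident s (u, v) && (other s (u, v) \in X)) +
  (incident s (u, v) && (other s (u, v) \notin X) && (other s (u, v) \in Y)) =
  incident s (u, v).
Proof.
by case: (incident _ _); case: (_ \in X); case: (_ \in Y).
Qed.

Lemma pe_tot s e X :
  (incident s e && (other s e \in X)) + (incident s e && (other s e \notin X)) = incident s e.
Proof. by case: (incident _ _); case: (_ \in X). Qed.

Lemma pe_compl X e : crossb (~: X) e = crossb X e.
Proof. by rewrite /crossb !inE; case: (_ \in X); case: (_ \in X). Qed.
End PE.

Section Gen.
Lemma sum_count (T : Type) (t : seq T) (P : pred T) : count P t = \sum_(e <- t) P e.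
Proof. by elim: t => [|z t IH]; rewrite ?big_nil ?big_cons //= IH. Qed.

Lemma sum_le (T : eqType) (t : seq T) (f g : T -> nat) :
  (forall e, e \in t -> f e <= g e) -> \sum_(e <- t) f e <= \sum_(e <- t) g e.
Proof.
move=> H; rewrite big_seq [X in _ <= X]big_seq; apply: leq_sum => e; exact: H.
Qed.

Lemma cut_compl (V : finType) (H : seq (V * V)) X : cut H (~: X) = cut H X.
Proof. by apply: eq_count => e; apply: pe_compl. Qed.

Lemma zip_iota (T : Type) (d : T) (t : seq T) n :
  zip (iota n (size t)) t = [seq (k, nth d t (k - n)) | k <- iota n (size t)].
Proof.
elim: t n => [|z t IH] n //=; rewrite subnn IH; congr (_ :: _).
apply/eq_in_map => k; rewrite mem_iota => /andP[h _].
by have -> : k - n = (k - n.+1).+1 by lia.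
Qed.

Lemma count_drop2 (T : Type) (t : seq T) d (P : pred T) (i j : nat) :
  i != j -> i < size t -> j < size t ->
  count P [seq q.2 | q <- zip (iota 0 (size t)) t & (q.1 != i) && (q.1 != j)]
   + P (nth d t i) + P (nth d t j) = count P t.
Proof.
move=> ij il jl.
rewrite (zip_iota d) filter_map -map_comp count_map count_filter.
rewrite (count_ord _ _ 0) size_iota (count_ord _ _ d).
rewrite [in RHS](bigD1 (Ordinal il)) //= [in RHS](bigD1 (Ordinal jl)) /=; last by rewrite -val_eqE /= eq_sym.
rewrite [X in X + _ + _ = _](_ : _ = \sum_(k < size t | (k != Ordinal il) && (k != Ordinal jl)) P (nth d t k)).
  by rewrite -addnA addnC [RHS]addnA.
rewrite [RHS]big_mkcond /=; apply: eq_bigr => k _.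
rewrite nth_iota // add0n subn0 -!val_eqE /=.
by case: (P _); case: (k != i :> nat); case: (k != j :> nat).
Qed.
End Gen.

Lemma ar1 l c1 c2 : l <= c1 -> c1 + 1.*2 = c2 -> c2 <= l.+1 -> False.
Proof. lia. Qed.
Lemma ar2 l c1 c2 (b : bool) : l <= c2 -> c1 + b.*2 = c2 -> c1 < l -> b && (c2 <= l.+1).
Proof. case: b => /=; lia. Qed.

Section Core.
Variable V : finType.
Variable G : seq (V * V).
Variables (l : nat) (s : V) (A : {set V}).
Hypothesis Hloop : forall e, e \in G -> e.1 != e.2.
Hypothesis Hl : 4 <= l.
Hypothesis Hs : s \notin A.
Hypothesis Hlam : forall x y, x \in A -> y \in A -> x != y -> lambda_ge G x y l.
Hypothesis HA : forall e, e \in G -> (e.1 \in A) || (e.2 \in A).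
Hypothesis Hdeg : deg G s = 4.

Local Notation m := (size G).
Definition Ed (i : nat) := nth (s, s) G i.
Definition av (i : 'I_m) : V := other s (Ed i).
Definition sep (X : {set V}) := [exists u in A, u \in X] && [exists w in A, w \notin X].
Definition dang (i j : 'I_m) (X : {set V}) :=
  [&& s \notin X, av i \in X, av j \in X, sep X & cut G X <= l.+1].
Definition Nd i j := [exists X, dang i j X].
Definition rho (X : {set V}) := count (fun e => incident s e && (other s e \in X)) G.
Definition rhoC (X : {set V}) := count (fun e => incident s e && (other s e \notin X)) G.
Local Notation L := (lvert G s).

Lemma cut_sep (X : {set V}) : sep X -> l <= cut G X.
Proof.
case/andP => /existsP[u /andP[uA uX]] /existsP[w /andP[wA wX]].
have uw : u != w by apply: contraNneq wX => <-.
exact: menger_easy (Hlam uA wA uw) uX wX.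
Qed.

Lemma lv_A (i : 'I_m) : i \in L -> av i \in A.
Proof.
rewrite inE /av /Ed => inc.
have eG : nth (s, s) G i \in G := mem_nth _ (ltn_ord i).
move: (HA eG) inc; rewrite /incident /other.
case: (nth (s, s) G i) => u v /=.
case: eqP => [->|_]; first by rewrite (negbTE Hs).
by move=> h /= /eqP ev; move: h; rewrite ev (negbTE Hs) orbF.
Qed.

Lemma lv_s (i : 'I_m) : i \in L -> av i != s.
Proof. by move=> iL; apply: contraNneq Hs => <-; exact: lv_A. Qed.

Lemma card_L : #|L| = 4.
Proof. by rewrite /lvert card_ord_pred. Qed.

Lemma rho_card (X : {set V}) : rho X = #|[set i : 'I_m | (i \in L) && (av i \in X)]|.
Proof.
rewrite /rho -(card_ord_pred _ _ (s, s)); apply: eq_card => i; rewrite !inE //.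
Qed.

Lemma rho_tot (X : {set V}) : rho X + rhoC X = 4.
Proof.
rewrite -Hdeg /rho /rhoC /deg !sum_count -big_split /=.
by apply: eq_bigr => e _; exact: pe_tot.
Qed.

Lemma cut_addS (X : {set V}) : s \notin X -> cut G (s |: X) + rho X = cut G X + rhoC X.
Proof.
move=> sX; rewrite /cut /rho /rhoC !sum_count -!big_split /=.
by apply: eq_big_seq => -[u v] uvG; exact: pe_addS sX (Hloop uvG).
Qed.

Lemma card2_le (S : {set 'I_m}) i j : i != j -> i \in S -> j \in S -> 2 <= #|S|.
Proof.
move=> ij iS jS; have := subset_leq_card (_ : [set i; j] \subset S).
rewrite cards2 ij; apply; apply/subsetP => k; rewrite !inE.
by case/orP => /eqP ->.
Qed.

Lemma card3_le (S : {set 'I_m}) i j k : i != j -> i != k -> j != k ->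
  i \in S -> j \in S -> k \in S -> 3 <= #|S|.
Proof.
move=> ij ik jk iS jS kS; have := subset_leq_card (_ : [set i; j; k] \subset S).
rewrite -setUA cardsU1 cards2 !inE jk (negbTE ij) (negbTE ik); apply.
by apply/subsetP => z; rewrite !inE; case/or3P => /eqP ->.
Qed.

Lemma sepS (X : {set V}) : s \notin X -> sep X -> sep (s |: X).
Proof.
move=> sX /andP[/existsP[u /andP[uA uX]] /existsP[w /andP[wA wX]]].
apply/andP; split; apply/existsP; [exists u | exists w]; rewrite !inE ?uA ?wA ?uX ?orbT //=.
by rewrite (negbTE wX) orbF; apply: contraNneq Hs => <-.
Qed.

Lemma dang_rho i j (X : {set V}) : i \in L -> j \in L -> i != j -> dang i j X -> rho X = 2.
Proof.
move=> iL jL ij /and5P[sX aiX ajX sepX cX].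
have h1 : 2 <= rho X.
  by rewrite rho_card; apply: (card2_le ij); rewrite inE ?iL ?jL ?aiX ?ajX.
have h2 := cut_sep (sepS sX sepX).
have := cut_addS sX; have := rho_tot X; lia.
Qed.

Lemma dang_out i j k (X : {set V}) : i \in L -> j \in L -> k \in L -> i != j -> k != i -> k != j ->
  dang i j X -> av k \notin X.
Proof.
move=> iL jL kL ij ki kj dX; apply/negP => akX.
have h2 := dang_rho iL jL ij dX; rewrite rho_card in h2.
case/and5P: dX => _ aiX ajX _ _.
have ik : i != k by rewrite eq_sym.
have jk : j != k by rewrite eq_sym.
pose S := [set i0 : 'I_m | (i0 \in L) && (av i0 \in X)].
have mi : i \in S by rewrite /S in_set iL aiX.
have mj : j \in S by rewrite /S in_set jL ajX.
have mk : k \in S by rewrite /S in_set kL akX.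
have h3 := card3_le ij ik jk mi mj mk.
by move: h3; rewrite /S h2.
Qed.

Lemma lift_cut (i j : 'I_m) (X : {set V}) : i \in L -> j \in L -> i != j -> s \notin X ->
  cut (liftG G s i j) X + ((av i \in X) && (av j \in X)).*2 = cut G X.
Proof.
move=> iL jL ij sX.
have ci k : k \in L -> crossb X (Ed k) = (av k \in X).
  rewrite inE /av /Ed /crossb /incident /other.
  case: (nth _ _ _) => u v /=; case: eqP => [->|us] /=.
    by move=> _; rewrite (negbTE sX); case: (v \in X).
  by move/eqP => ->; rewrite (negbTE sX); case: (u \in X).
rewrite /cut /liftG count_cat /=.
rewrite -(count_drop2 (s, s) (crossb X) (_ : val i != val j) (ltn_ord i) (ltn_ord j)) //.
rewrite -/(Ed i) -/(Ed j) (ci _ iL) (ci _ jL) /crossb /= -/(av i) -/(av j).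
move: (count _ _) => c.
by case: (av i \in X); case: (av j \in X) => /=; lia.
Qed.

Lemma adm_iff (i j : 'I_m) : admissible G s A l i j <->
  [/\ i \in L, j \in L, i != j & ~~ Nd i j].
Proof.
split.
  move=> [iL jL ij H]; split => //; apply/negP => /existsP[X dX].
  case/and5P: (dX) => sX aiX ajX sepX cX.
  move: sepX => /andP[/existsP[u /andP[uA uX]] /existsP[w /andP[wA wX]]].
  have us : u != s by apply: contraNneq Hs => <-.
  have ws : w != s by apply: contraNneq Hs => <-.
  have uw : u != w by apply: contraNneq wX => <-.
  have := H u w us ws uw; rewrite /tau uA wA /= => lam.
  have h1 := menger_easy lam uX wX.
  have h2 := lift_cut iL jL ij sX; rewrite aiX ajX /= in h2.
  move: h1 h2 cX; move: (cut (liftG G s i j) X) (cut G X) => c1 c2; exact: ar1.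
move=> [iL jL ij nN]; split => // u w us ws uw.
rewrite /tau; case: (boolP ((u \in A) && (w \in A))) => [/andP[uA wA]|_]; last first.
  by exists [::]; split.
case: (menger (liftG G s i j) l uw) => // -[W [uW wW cW]].
exfalso; move/negP: nN; apply; apply/existsP.
pose X := if s \in W then ~: W else W.
have sX : s \notin X by rewrite /X; case: ifP => h; rewrite ?inE ?h.
have cX : cut (liftG G s i j) X < l by rewrite /X; case: ifP; rewrite ?cut_compl.
have sepX : sep X.
  rewrite /X; case: ifP => _; apply/andP; split; apply/existsP.
  - by exists w; rewrite inE wA.
  - by exists u; rewrite inE uA negbK.
  - by exists u; rewrite uA.
  - by exists w; rewrite wA.
have h1 := cut_sep sepX; have h2 := lift_cut iL jL ij sX.
exists X; rewrite /dang sX sepX /=.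
move: h1 h2 cX; move: (cut (liftG G s i j) X) (cut G X) => c1 c2.
rewrite andbA; exact: ar2.
Qed.

Lemma sepI (X : {set V}) a b : a \in A -> b \in A -> a \in X -> b \notin X -> sep X.
Proof.
move=> aA bA aX bX; apply/andP; split; apply/existsP; [exists a | exists b].
  by rewrite aA aX.
by rewrite bA bX.
Qed.

Lemma count_ge1 (P : pred (V * V)) (i : 'I_m) : P (Ed i) -> 0 < count P G.
Proof.
move=> Pi; rewrite -(card_ord_pred _ _ (s, s)); apply/card_gt0P; exists i.
by rewrite inE.
Qed.

Lemma dang_compl i j p q (X : {set V}) : i \in L -> j \in L -> p \in L -> q \in L ->
  i != j -> p != q -> p != i -> p != j -> q != i -> q != j ->
  dang i j X -> dang p q (~: (s |: X)).
Proof.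
move=> iL jL pL qL ij pq pi pj qi qj dX.
have rX := dang_rho iL jL ij dX.
have apX := dang_out iL jL pL ij pi pj dX.
have aqX := dang_out iL jL qL ij qi qj dX.
case/and5P: dX => sX aiX ajX sepX cX.
apply/and5P; split.
- by rewrite !inE eqxx.
- by rewrite !inE negb_or (lv_s pL) apX.
- by rewrite !inE negb_or (lv_s qL) aqX.
- apply: (sepI (lv_A pL) (lv_A iL)); first by rewrite !inE negb_or (lv_s pL) apX.
  by rewrite !inE aiX orbT.
- rewrite cut_compl; have h1 := cut_addS sX; have h2 := rho_tot X.
  move: h1 h2 cX rX; move: (cut G (s |: X)) (cut G X) (rho X) (rhoC X) => a b c d.
  clear; lia.
Qed.

Lemma parity i j k mm (X Y : {set V}) : i \in L -> j \in L -> k \in L -> mm \in L ->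
  i != j -> i != k -> j != k -> mm != i -> mm != j -> mm != k ->
  dang i j X -> dang i k Y -> odd l.
Proof.
move=> iL jL kL mL ij ik jk mi mj mk dX dY.
have ji : j != i by rewrite eq_sym.
have ki : k != i by rewrite eq_sym.
have kj : k != j by rewrite eq_sym.
have rX := dang_rho iL jL ij dX.
have rY := dang_rho iL kL ik dY.
have ajY := dang_out iL kL jL ik ji jk dY.
have akX := dang_out iL jL kL ij ki kj dX.
have amX := dang_out iL jL mL ij mi mj dX.
have amY := dang_out iL kL mL ik mi mk dY.
have ms := lv_s mL.
have aiA := lv_A iL; have ajA := lv_A jL; have akA := lv_A kL; have amA := lv_A mL.
case/and5P: dX => sX aiX ajX _ cX.
case/and5P: dY => sY aiY akY _ cY.
have cP : l <= cut G (X :&: Y).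
  by apply: cut_sep; apply: (sepI aiA ajA); rewrite !inE ?aiX ?aiY ?(negbTE ajY) ?andbF.
have cQ : l <= cut G (X :\: Y).
  by apply: cut_sep; apply: (sepI ajA aiA); rewrite !inE ?ajX ?aiY ?(negbTE ajY).
have cR : l <= cut G (Y :\: X).
  by apply: cut_sep; apply: (sepI akA aiA); rewrite !inE ?(negbTE akX) ?aiX ?akY.
have cO : l <= cut G (~: (s |: (X :|: Y))).
  apply: cut_sep; apply: (sepI amA aiA); rewrite !inE ?aiX ?orbT //.
  by rewrite (negbTE ms) (negbTE amX) (negbTE amY).
have main : cut G (X :&: Y) + cut G (X :\: Y) + cut G (Y :\: X) + cut G (~: (s |: (X :|: Y))) +
   rho X + rho Y + count (fun e => incident s e && (other s e \in X) && (other s e \in Y)) G <=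
   cut G X + cut G X + (cut G Y + cut G Y) +
   count (fun e => incident s e && (other s e \notin X) && (other s e \notin Y)) G.
  rewrite /cut /rho !sum_count -!big_split /=.
  apply: sum_le => -[u v] uvG.
  by have := pe_par sX sY (Hloop uvG); rewrite -!addnn.
have rXY : 0 < count (fun e => incident s e && (other s e \in X) && (other s e \in Y)) G.
  apply: (count_ge1 (i := i)); move: iL; rewrite inE => ->; rewrite -/(av i) aiX aiY.
  done.
have rR : 0 < count (fun e => incident s e && (other s e \notin X) && (other s e \in Y)) G.
  apply: (count_ge1 (i := k)); move: kL; rewrite inE => ->; rewrite -/(av k) akX akY.
  done.
have rest : count (fun e => incident s e && (other s e \notin X) && (other s e \notin Y)) G +
   rho X + count (fun e => incident s e && (other s e \notin X) && (other s e \in Y)) G = 4.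
  rewrite -Hdeg /deg /rho !sum_count -!big_split /=.
  by apply: eq_bigr => -[u v] _; apply: pe_rest.
have un : cut G (X :&: Y) + cut G (X :\: Y) = cut G X +
   (count (fun e => ((e.1 \in X :&: Y) && (e.2 \in X :\: Y)) || ((e.1 \in X :\: Y) && (e.2 \in X :&: Y))) G +
    count (fun e => ((e.1 \in X :&: Y) && (e.2 \in X :\: Y)) || ((e.1 \in X :\: Y) && (e.2 \in X :&: Y))) G).
  rewrite /cut !sum_count -!big_split /=.
  by apply: eq_bigr => -[u v] _; rewrite pe_union -addnn.
move: cP cQ cR cO cX cY rX rY main rXY rR rest un.
move: (cut G (X :&: Y)) (cut G (X :\: Y)) (cut G (Y :\: X)) (cut G (~: (s |: (X :|: Y)))).
move: (cut G X) (cut G Y) (rho X) (rho Y) => a1 a2 a3 a4 a5 a6 a7 a8.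
move: (count _ G) (count _ G) (count _ G) (count _ G) => b1 b2 b3 b4.
move=> h1 h2 h3 h4 h5 h6 h7 h8 h9 h10 h11 h12 h13.
have -> : l = (b1 + b1).+1 by clear -Hl h1 h2 h3 h4 h5 h6 h7 h8 h9 h10 h11 h12 h13; lia.
by rewrite /= addnn odd_double.
Qed.

Lemma three i j k mm (X Y Z : {set V}) : i \in L -> j \in L -> k \in L -> mm \in L ->
  i != j -> i != k -> j != k -> mm != i -> mm != j -> mm != k ->
  dang i j X -> dang i k Y -> dang i mm Z -> False.
Proof.
move=> iL jL kL mL ij ik jk mi mj mk dX dY dZ.
have ji : j != i by rewrite eq_sym.
have ki : k != i by rewrite eq_sym.
have kj : k != j by rewrite eq_sym.
have im : i != mm by rewrite eq_sym.
have jm : j != mm by rewrite eq_sym.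
have km : k != mm by rewrite eq_sym.
have ajY := dang_out iL kL jL ik ji jk dY.
have ajZ := dang_out iL mL jL im ji jm dZ.
have akX := dang_out iL jL kL ij ki kj dX.
have akZ := dang_out iL mL kL im ki km dZ.
have amX := dang_out iL jL mL ij mi mj dX.
have amY := dang_out iL kL mL ik mi mk dY.
have aiA := lv_A iL; have ajA := lv_A jL; have akA := lv_A kL; have amA := lv_A mL.
case/and5P: dX => sX aiX ajX _ cX.
case/and5P: dY => sY aiY akY _ cY.
case/and5P: dZ => sZ aiZ amZ _ cZ.
have c1 : l <= cut G (X :&: Y :&: Z).
  by apply: cut_sep; apply: (sepI aiA ajA); rewrite !inE ?aiX ?aiY ?aiZ ?(negbTE ajY) ?andbF.
have c2 : l <= cut G (X :\: Y :\: Z).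
  by apply: cut_sep; apply: (sepI ajA aiA); rewrite !inE ?ajX ?(negbTE ajY) ?(negbTE ajZ) ?aiZ.
have c3 : l <= cut G (Y :\: X :\: Z).
  by apply: cut_sep; apply: (sepI akA aiA); rewrite !inE ?(negbTE akX) ?akY ?(negbTE akZ) ?aiZ.
have c4 : l <= cut G (Z :\: X :\: Y).
  by apply: cut_sep; apply: (sepI amA aiA); rewrite !inE ?(negbTE amX) ?(negbTE amY) ?amZ ?aiY.
have main : cut G (X :&: Y :&: Z) + cut G (X :\: Y :\: Z) + cut G (Y :\: X :\: Z) +
   cut G (Z :\: X :\: Y) <= cut G X + cut G Y + cut G Z.
  rewrite /cut !sum_count -!big_split /=.
  by apply: sum_le => -[u v] _; apply: pe_three.
move: c1 c2 c3 c4 cX cY cZ main.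
move: (cut G (X :&: Y :&: Z)) (cut G (X :\: Y :\: Z)) (cut G (Y :\: X :\: Z)) (cut G (Z :\: X :\: Y)).
move: (cut G X) (cut G Y) (cut G Z) => a1 a2 a3 b1 b2 b3 b4.
clear -Hl; lia.
Qed.

Lemma Nd_sym i j : Nd i j = Nd j i.
Proof.
rewrite /Nd; apply: eq_existsb => X; rewrite /dang.
by case: (s \notin X); case: (av i \in X); case: (av j \in X).
Qed.

Lemma Nd_compl i j p q : i \in L -> j \in L -> p \in L -> q \in L ->
  i != j -> p != q -> p != i -> p != j -> q != i -> q != j -> Nd i j -> Nd p q.
Proof.
move=> iL jL pL qL ij pq pi pj qi qj /existsP[X dX]; apply/existsP.
by exists (~: (s |: X)); apply: dang_compl dX.
Qed.

Lemma Nd_witness i j : Nd i j -> exists X, dang i j X.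
Proof. by case/existsP => X dX; exists X. Qed.

Lemma adm_b (i j : 'I_m) : admissible G s A l i j <-> [&& i \in L, j \in L, i != j & ~~ Nd i j].
Proof. rewrite adm_iff; split; [case=> -> -> -> -> // | by case/and4P]. Qed.

Lemma second : is_2K2 L (admissible G s A l) -> odd l.
Proof.
case=> f1 [f2 [f3 [f4 [U HL H]]]].
move: U; rewrite /= !inE !negb_or => /and4P[/and3P[d12 d13 d14] /andP[d23 d24] d34 _].
have inL z : z \in [set f1; f2; f3; f4] -> z \in L by rewrite HL.
have f1L : f1 \in L by apply: inL; rewrite !inE eqxx.
have f2L : f2 \in L by apply: inL; rewrite !inE eqxx !orbT.
have f3L : f3 \in L by apply: inL; rewrite !inE eqxx !orbT.
have f4L : f4 \in L by apply: inL; rewrite !inE eqxx !orbT.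
have d21 : f2 != f1 by rewrite eq_sym.
have d31 : f3 != f1 by rewrite eq_sym.
have d41 : f4 != f1 by rewrite eq_sym.
have d32 : f3 != f2 by rewrite eq_sym.
have d42 : f4 != f2 by rewrite eq_sym.
have d43 : f4 != f3 by rewrite eq_sym.
have n13 : Nd f1 f3.
  have := H f1 f3 f1L f3L; rewrite adm_b f1L f3L d13 /=.
  rewrite /upair /= !xpair_eqE ?eqxx ?(negbTE d12) ?(negbTE d13) ?(negbTE d14) ?(negbTE d21) ?(negbTE d23) ?(negbTE d24) ?(negbTE d31) ?(negbTE d32) ?(negbTE d34) ?(negbTE d41) ?(negbTE d42) ?(negbTE d43) /= => -[h _].
  by case: (boolP (Nd _ _)) => // /h.
have n14 : Nd f1 f4.
  have := H f1 f4 f1L f4L; rewrite adm_b f1L f4L d14 /=.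
  rewrite /upair /= !xpair_eqE ?eqxx ?(negbTE d12) ?(negbTE d13) ?(negbTE d14) ?(negbTE d21) ?(negbTE d23) ?(negbTE d24) ?(negbTE d31) ?(negbTE d32) ?(negbTE d34) ?(negbTE d41) ?(negbTE d42) ?(negbTE d43) /= => -[h _].
  by case: (boolP (Nd _ _)) => // /h.
have [X dX] := Nd_witness n13.
have [Y dY] := Nd_witness n14.
apply: (parity (j := f3) (k := f4) (mm := f2)) f1L f3L f4L f2L d13 d14 d34 _ _ _ dX dY.
- by rewrite eq_sym.
- by rewrite eq_sym.
- by rewrite eq_sym.
Qed.

Lemma first : is_K4 L (admissible G s A l) \/ is_K22 L (admissible G s A l) \/
  is_2K2 L (admissible G s A l).
Proof.
have [e1 [e2 [e3 [e4 [HL U]]]]] : exists e1 e2 e3 e4,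
    L = [set e1; e2; e3; e4] /\ uniq [:: e1; e2; e3; e4].
  have sz : size (enum L) = 4 by rewrite -cardE card_L.
  case E: (enum L) sz => [|a [|b [|c [|d [|? ?]]]]] // _.
  exists a, b, c, d; split; last by rewrite -E enum_uniq.
  apply/setP => z; rewrite -[z \in L]mem_enum E !inE.
  by case: (z == a); case: (z == b); case: (z == c); case: (z == d).
move: U; rewrite /= !inE !negb_or => /and4P[/and3P[d12 d13 d14] /andP[d23 d24] d34 _].
have d21 : e2 != e1 by rewrite eq_sym.
have d31 : e3 != e1 by rewrite eq_sym.
have d41 : e4 != e1 by rewrite eq_sym.
have d32 : e3 != e2 by rewrite eq_sym.
have d42 : e4 != e2 by rewrite eq_sym.
have d43 : e4 != e3 by rewrite eq_sym.
have e1L : e1 \in L by rewrite HL !inE eqxx.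
have e2L : e2 \in L by rewrite HL !inE eqxx ?orbT.
have e3L : e3 \in L by rewrite HL !inE eqxx ?orbT.
have e4L : e4 \in L by rewrite HL !inE eqxx ?orbT.
have Lmem a : a \in L -> [\/ a = e1, a = e2, a = e3 | a = e4].
  case: (eqVneq a e1) => [->|n1]; first by constructor 1.
  case: (eqVneq a e2) => [->|n2]; first by constructor 2.
  case: (eqVneq a e3) => [->|n3]; first by constructor 3.
  case: (eqVneq a e4) => [->|n4]; first by constructor 4.
  by rewrite HL !inE (negbTE n1) (negbTE n2) (negbTE n3) (negbTE n4).
have C21 : Nd e2 e1 = Nd e1 e2 by rewrite Nd_sym.
have C31 : Nd e3 e1 = Nd e1 e3 by rewrite Nd_sym.
have C41 : Nd e4 e1 = Nd e1 e4 by rewrite Nd_sym.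
have C23 : Nd e2 e3 = Nd e1 e4.
  by apply/idP/idP; [apply: (Nd_compl (i:=e2) (j:=e3)) => // | apply: (Nd_compl (i:=e1) (j:=e4)) => //].
have C24 : Nd e2 e4 = Nd e1 e3.
  by apply/idP/idP; [apply: (Nd_compl (i:=e2) (j:=e4)) => // | apply: (Nd_compl (i:=e1) (j:=e3)) => //].
have C34 : Nd e3 e4 = Nd e1 e2.
  by apply/idP/idP; [apply: (Nd_compl (i:=e3) (j:=e4)) => // | apply: (Nd_compl (i:=e1) (j:=e2)) => //].
have C32 : Nd e3 e2 = Nd e1 e4 by rewrite Nd_sym C23.
have C42 : Nd e4 e2 = Nd e1 e3 by rewrite Nd_sym C24.
have C43 : Nd e4 e3 = Nd e1 e2 by rewrite Nd_sym C34.
case: (boolP (Nd e1 e2)) => n12; case: (boolP (Nd e1 e3)) => n13;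
  case: (boolP (Nd e1 e4)) => n14.
-
  exfalso; have [X dX] := Nd_witness n12; have [Y dY] := Nd_witness n13.
  have [Z dZ] := Nd_witness n14.
  exact: (three (i := e1) e1L e2L e3L e4L d12 d13 d23 d41 d42 d43 dX dY dZ).
-
  right; right; exists e1, e4, e2, e3; split.
  - by rewrite /= !inE !negb_or ?d12 ?d13 ?d14 ?d21 ?d23 ?d24 ?d31 ?d32 ?d34 ?d41 ?d42 ?d43.
  - rewrite HL; apply/setP => z; rewrite !inE.
    by case: (z == e1); case: (z == e2); case: (z == e3); case: (z == e4).
  - move=> a b aL bL; rewrite adm_b aL bL /=.
  case: (Lmem a aL) => ->; case: (Lmem b bL) => ->; rewrite ?eqxx /= ?(negbTE d12) ?(negbTE d13) ?(negbTE d14) ?(negbTE d21) ?(negbTE d23) ?(negbTE d24) ?(negbTE d31) ?(negbTE d32) ?(negbTE d34) ?(negbTE d41) ?(negbTE d42) ?(negbTE d43) /= ?C21 ?C23 ?C24 ?C31 ?C32 ?C34 ?C41 ?C42 ?C43 ?n12 ?n13 ?(negbTE n14) /=;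
    rewrite /upair /= ?xpair_eqE ?eqxx ?(negbTE d12) ?(negbTE d13) ?(negbTE d14) ?(negbTE d21) ?(negbTE d23) ?(negbTE d24) ?(negbTE d31) ?(negbTE d32) ?(negbTE d34) ?(negbTE d41) ?(negbTE d42) ?(negbTE d43) /=; by split.
-
  right; right; exists e1, e3, e2, e4; split.
  - by rewrite /= !inE !negb_or ?d12 ?d13 ?d14 ?d21 ?d23 ?d24 ?d31 ?d32 ?d34 ?d41 ?d42 ?d43.
  - rewrite HL; apply/setP => z; rewrite !inE.
    by case: (z == e1); case: (z == e2); case: (z == e3); case: (z == e4).
  - move=> a b aL bL; rewrite adm_b aL bL /=.
  case: (Lmem a aL) => ->; case: (Lmem b bL) => ->; rewrite ?eqxx /= ?(negbTE d12) ?(negbTE d13) ?(negbTE d14) ?(negbTE d21) ?(negbTE d23) ?(negbTE d24) ?(negbTE d31) ?(negbTE d32) ?(negbTE d34) ?(negbTE d41) ?(negbTE d42) ?(negbTE d43) /= ?C21 ?C23 ?C24 ?C31 ?C32 ?C34 ?C41 ?C42 ?C43 ?n12 ?(negbTE n13) ?n14 /=;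
    rewrite /upair /= ?xpair_eqE ?eqxx ?(negbTE d12) ?(negbTE d13) ?(negbTE d14) ?(negbTE d21) ?(negbTE d23) ?(negbTE d24) ?(negbTE d31) ?(negbTE d32) ?(negbTE d34) ?(negbTE d41) ?(negbTE d42) ?(negbTE d43) /=; by split.
-
  right; left; exists e1, e3, e2, e4; split.
  - by rewrite /= !inE !negb_or ?d12 ?d13 ?d14 ?d21 ?d23 ?d24 ?d31 ?d32 ?d34 ?d41 ?d42 ?d43.
  - rewrite HL; apply/setP => z; rewrite !inE.
    by case: (z == e1); case: (z == e2); case: (z == e3); case: (z == e4).
  - move=> a b aL bL; rewrite adm_b aL bL /=.
  case: (Lmem a aL) => ->; case: (Lmem b bL) => ->; rewrite ?eqxx /= ?(negbTE d12) ?(negbTE d13) ?(negbTE d14) ?(negbTE d21) ?(negbTE d23) ?(negbTE d24) ?(negbTE d31) ?(negbTE d32) ?(negbTE d34) ?(negbTE d41) ?(negbTE d42) ?(negbTE d43) /= ?C21 ?C23 ?C24 ?C31 ?C32 ?C34 ?C41 ?C42 ?C43 ?n12 ?(negbTE n13) ?(negbTE n14) /=;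
    rewrite /upair /= ?xpair_eqE ?eqxx ?(negbTE d12) ?(negbTE d13) ?(negbTE d14) ?(negbTE d21) ?(negbTE d23) ?(negbTE d24) ?(negbTE d31) ?(negbTE d32) ?(negbTE d34) ?(negbTE d41) ?(negbTE d42) ?(negbTE d43) /=; by split.
-
  right; right; exists e1, e2, e3, e4; split.
  - by rewrite /= !inE !negb_or ?d12 ?d13 ?d14 ?d21 ?d23 ?d24 ?d31 ?d32 ?d34 ?d41 ?d42 ?d43.
  - rewrite HL; apply/setP => z; rewrite !inE.
    by case: (z == e1); case: (z == e2); case: (z == e3); case: (z == e4).
  - move=> a b aL bL; rewrite adm_b aL bL /=.
  case: (Lmem a aL) => ->; case: (Lmem b bL) => ->; rewrite ?eqxx /= ?(negbTE d12) ?(negbTE d13) ?(negbTE d14) ?(negbTE d21) ?(negbTE d23) ?(negbTE d24) ?(negbTE d31) ?(negbTE d32) ?(negbTE d34) ?(negbTE d41) ?(negbTE d42) ?(negbTE d43) /= ?C21 ?C23 ?C24 ?C31 ?C32 ?C34 ?C41 ?C42 ?C43 ?(negbTE n12) ?n13 ?n14 /=;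
    rewrite /upair /= ?xpair_eqE ?eqxx ?(negbTE d12) ?(negbTE d13) ?(negbTE d14) ?(negbTE d21) ?(negbTE d23) ?(negbTE d24) ?(negbTE d31) ?(negbTE d32) ?(negbTE d34) ?(negbTE d41) ?(negbTE d42) ?(negbTE d43) /=; by split.
-
  right; left; exists e1, e2, e3, e4; split.
  - by rewrite /= !inE !negb_or ?d12 ?d13 ?d14 ?d21 ?d23 ?d24 ?d31 ?d32 ?d34 ?d41 ?d42 ?d43.
  - rewrite HL; apply/setP => z; rewrite !inE.
    by case: (z == e1); case: (z == e2); case: (z == e3); case: (z == e4).
  - move=> a b aL bL; rewrite adm_b aL bL /=.
  case: (Lmem a aL) => ->; case: (Lmem b bL) => ->; rewrite ?eqxx /= ?(negbTE d12) ?(negbTE d13) ?(negbTE d14) ?(negbTE d21) ?(negbTE d23) ?(negbTE d24) ?(negbTE d31) ?(negbTE d32) ?(negbTE d34) ?(negbTE d41) ?(negbTE d42) ?(negbTE d43) /= ?C21 ?C23 ?C24 ?C31 ?C32 ?C34 ?C41 ?C42 ?C43 ?(negbTE n12) ?n13 ?(negbTE n14) /=;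
    rewrite /upair /= ?xpair_eqE ?eqxx ?(negbTE d12) ?(negbTE d13) ?(negbTE d14) ?(negbTE d21) ?(negbTE d23) ?(negbTE d24) ?(negbTE d31) ?(negbTE d32) ?(negbTE d34) ?(negbTE d41) ?(negbTE d42) ?(negbTE d43) /=; by split.
-
  right; left; exists e1, e2, e4, e3; split.
  - by rewrite /= !inE !negb_or ?d12 ?d13 ?d14 ?d21 ?d23 ?d24 ?d31 ?d32 ?d34 ?d41 ?d42 ?d43.
  - rewrite HL; apply/setP => z; rewrite !inE.
    by case: (z == e1); case: (z == e2); case: (z == e3); case: (z == e4).
  - move=> a b aL bL; rewrite adm_b aL bL /=.
  case: (Lmem a aL) => ->; case: (Lmem b bL) => ->; rewrite ?eqxx /= ?(negbTE d12) ?(negbTE d13) ?(negbTE d14) ?(negbTE d21) ?(negbTE d23) ?(negbTE d24) ?(negbTE d31) ?(negbTE d32) ?(negbTE d34) ?(negbTE d41) ?(negbTE d42) ?(negbTE d43) /= ?C21 ?C23 ?C24 ?C31 ?C32 ?C34 ?C41 ?C42 ?C43 ?(negbTE n12) ?(negbTE n13) ?n14 /=;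
    rewrite /upair /= ?xpair_eqE ?eqxx ?(negbTE d12) ?(negbTE d13) ?(negbTE d14) ?(negbTE d21) ?(negbTE d23) ?(negbTE d24) ?(negbTE d31) ?(negbTE d32) ?(negbTE d34) ?(negbTE d41) ?(negbTE d42) ?(negbTE d43) /=; by split.
-
  left; split; first exact: card_L.
  move=> a b aL bL; rewrite adm_b aL bL /=.
  case: (Lmem a aL) => ->; case: (Lmem b bL) => ->; rewrite ?eqxx /= ?(negbTE d12) ?(negbTE d13) ?(negbTE d14) ?(negbTE d21) ?(negbTE d23) ?(negbTE d24) ?(negbTE d31) ?(negbTE d32) ?(negbTE d34) ?(negbTE d41) ?(negbTE d42) ?(negbTE d43) /= ?C21 ?C23 ?C24 ?C31 ?C32 ?C34 ?C41 ?C42 ?C43 ?(negbTE n12) ?(negbTE n13) ?(negbTE n14) /=;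
    by split.
Qed.
End Core.

Theorem proposition4p4 (V : finType) (G : seq (V * V)) (l : nat) (s : V)
    (A : {set V}) :
  (forall e, e \in G -> e.1 != e.2) ->
  4 <= l ->
  A \proper [set: V] ->
  s \notin A ->
  (forall x y, x \in A -> y \in A -> x != y -> lambda_ge G x y l) ->
  (forall e, e \in G -> (e.1 \in A) || (e.2 \in A)) ->
  deg G s = 4 ->
  [/\ is_K4 (lvert G s) (admissible G s A l)
      \/ is_K22 (lvert G s) (admissible G s A l)
      \/ is_2K2 (lvert G s) (admissible G s A l)
    & is_2K2 (lvert G s) (admissible G s A l) -> odd l].
Proof.
move=> h1 h2 h3 h4 h5 h6 h7.
by split; [apply: first | apply: second].
Qed.
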